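(* Let $k>1$ be an integer and $L\in\mathcal L_k$. Then the automorphism group of the subgraph of $\mathcal F_k$ induced on $\phi_k^{-1}(L)$ is uncountable.
   Context: The vertex set $V$ consists of all reduced fractions $p/q$ with $p,q\in\mathbb Z$, $\gcd(p,q)=1$, together with $1/0$; here $p/q$ and $(-p)/(-q)$ denote the same vertex. For vertices define $d(p/q,a/b)=|pb-qa|$. The graph $\mathcal F_k$ has vertex set $V$, with an edge between $p/q$ and $a/b$ exactly when $d(p/q,a/b)=k$. An element $(a,b)\in(\mathbb Z/k\mathbb Z)^2$ is admissible if for $\lambda\in\mathbb Z/k\mathbb Z$, $(\lambda a,\lambda b)=0$ implies $\lambda=0$; $\mathcal L_k$ is the set of admissible elements modulo $v\sim\lambda v$ for units $\lambda\in(\mathbb Z/k\mathbb Z)^*$; $\phi_k:V\to\mathcal L_k$ sends $p/q$ to the class of $(p\bmod k,q\bmod k)$. *)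

(* Defs.v *)
From HB Require Import structures.
From mathcomp Require Import all_boot all_algebra.
Set Implicit Arguments. Unset Strict Implicit. Unset Printing Implicit Defensive.
Import GRing.Theory Num.Theory.
Local Open Scope ring_scope.

(* Vertices: reduced fractions p/q (gcd(p,q)=1), including 1/0, with p/q and
   (-p)/(-q) identified.  We use the canonical representative with q > 0,
   or (p,q) = (1,0) for the vertex 1/0. *)
Definition is_vertex (pq : int * int) : bool :=
  coprimez pq.1 pq.2 && ((0 < pq.2) || (pq == (1, 0))).

Definition V := {pq : int * int | is_vertex pq}.

Definition vnum (v : V) : int := (sval v).1.
Definition vden (v : V) : int := (sval v).2.

Definition dist (v w : V) : int := `|vnum v * vden w - vden v * vnum w|.

Definition Fk_adj (k : nat) (v w : V) : Prop := dist v w = k%:Z.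

Definition admissible (k : nat) (a b : 'Z_k) : Prop :=
  forall lam : 'Z_k, lam * a = 0 -> lam * b = 0 -> lam = 0.

(* phi_k v equals the class of the admissible pair (a,b) in L_k, i.e.
   (p mod k, q mod k) = lam (a,b) for some unit lam of Z/kZ.  (Independent of
   the sign of the representative, since -1 is a unit.) *)
Definition in_fiber (k : nat) (a b : 'Z_k) (v : V) : Prop :=
  exists2 lam : 'Z_k, lam \is a GRing.unit &
    ((vnum v)%:~R = lam * a /\ (vden v)%:~R = lam * b).

Arguments in_fiber : clear implicits.
Arguments admissible : clear implicits.

Definition fiber (k : nat) (a b : 'Z_k) := {v : V | in_fiber k a b v}.
Arguments fiber : clear implicits.

Definition is_fiber_aut (k : nat) (a b : 'Z_k) (f : fiber k a b -> fiber k a b) : Prop :=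
  bijective f /\
  forall x y : fiber k a b, Fk_adj k (sval x) (sval y) <-> Fk_adj k (sval (f x)) (sval (f y)).
Arguments is_fiber_aut : clear implicits.

(* Main.v *)
Require Import Defs.
From HB Require Import structures.
From mathcomp Require Import all_boot all_algebra.
From mathcomp Require Import zify ring lra.
From Stdlib Require Import ClassicalEpsilon ProofIrrelevance.
Set Implicit Arguments. Unset Strict Implicit. Unset Printing Implicit Defensive.
Import GRing.Theory Num.Theory.
Local Open Scope ring_scope.

Definition det2 (x y : int * int) : int := x.1 * y.2 - x.2 * y.1.
Definition tr (c d e f : int) (x : int * int) : int * int :=
  (f * x.1 - e * x.2, - d * x.1 + c * x.2).
Definition untr (c d e f : int) (y : int * int) : int * int :=
  (c * y.1 + e * y.2, d * y.1 + f * y.2).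
Definition refl (n : int) (y : int * int) : int * int := ((2 * n + 1) * y.2 - y.1, y.2).
Definition neg (x : int * int) : int * int := (- x.1, - x.2).
Definition Mn c d e f n x := untr c d e f (refl n (tr c d e f x)).
Definition reg (n : int) (y : int * int) : bool :=
  (n * (y.2 * y.2) < y.1 * y.2) && (y.1 * y.2 < (n + 1) * (y.2 * y.2)).

Lemma pair_eta (x : int * int) : x = (x.1, x.2). Proof. by case: x. Qed.

Lemma tr_untr c d e f y : c * f - d * e = 1 -> tr c d e f (untr c d e f y) = y.
Proof.
move=> h; case: y => y1 y2; rewrite /tr /untr /=; congr pair.
  by transitivity ((c*f - d*e) * y1); [ring | rewrite h mul1r].
by transitivity ((c*f - d*e) * y2); [ring | rewrite h mul1r].
Qed.

Lemma untr_tr c d e f x : c * f - d * e = 1 -> untr c d e f (tr c d e f x) = x.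
Proof.
move=> h; case: x => y1 y2; rewrite /tr /untr /=; congr pair.
  by transitivity ((c*f - d*e) * y1); [ring | rewrite h mul1r].
by transitivity ((c*f - d*e) * y2); [ring | rewrite h mul1r].
Qed.

Lemma det2_tr c d e f x y : c * f - d * e = 1 ->
  det2 (tr c d e f x) (tr c d e f y) = det2 x y.
Proof.
move=> h; rewrite /det2 /tr /=.
by transitivity ((c*f - d*e) * (x.1 * y.2 - x.2 * y.1)); [ring | rewrite h mul1r].
Qed.

Lemma det2_untr c d e f x y : c * f - d * e = 1 ->
  det2 (untr c d e f x) (untr c d e f y) = det2 x y.
Proof.
move=> h; rewrite /det2 /untr /=.
by transitivity ((c*f - d*e) * (x.1 * y.2 - x.2 * y.1)); [ring | rewrite h mul1r].
Qed.

Lemma det2_refl n x y : det2 (refl n x) (refl n y) = - det2 x y.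
Proof. rewrite /det2 /refl /=; ring. Qed.

Lemma det2_negl x y : det2 (neg x) y = - det2 x y.
Proof. rewrite /det2 /neg /=; ring. Qed.
Lemma det2_negr x y : det2 x (neg y) = - det2 x y.
Proof. rewrite /det2 /neg /=; ring. Qed.
Lemma det2_sym x y : det2 y x = - det2 x y.
Proof. rewrite /det2; ring. Qed.

Lemma refl_invol n y : refl n (refl n y) = y.
Proof. case: y => y1 y2; rewrite /refl /=; congr pair; ring. Qed.

Lemma tr_neg c d e f x : tr c d e f (neg x) = neg (tr c d e f x).
Proof. rewrite /tr /neg /=; congr pair; ring. Qed.
Lemma untr_neg c d e f x : untr c d e f (neg x) = neg (untr c d e f x).
Proof. rewrite /untr /neg /=; congr pair; ring. Qed.
Lemma refl_neg n x : refl n (neg x) = neg (refl n x).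
Proof. rewrite /refl /neg /=; congr pair; ring. Qed.
Lemma neg_invol x : neg (neg x) = x.
Proof. by case: x => x1 x2; rewrite /neg /= !opprK. Qed.

Lemma tr_Mn c d e f n x : c * f - d * e = 1 ->
  tr c d e f (Mn c d e f n x) = refl n (tr c d e f x).
Proof. by move=> h; rewrite /Mn tr_untr. Qed.

Lemma Mn_invol c d e f n x : c * f - d * e = 1 ->
  Mn c d e f n (Mn c d e f n x) = x.
Proof. by move=> h; rewrite /Mn tr_untr // refl_invol untr_tr. Qed.

Lemma Mn_neg c d e f n x : Mn c d e f n (neg x) = neg (Mn c d e f n x).
Proof. by rewrite /Mn tr_neg refl_neg untr_neg. Qed.

Lemma det2_Mn c d e f n x y : c * f - d * e = 1 ->
  det2 (Mn c d e f n x) (Mn c d e f n y) = - det2 x y.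
Proof. by move=> h; rewrite /Mn det2_untr // det2_refl det2_tr. Qed.

Lemma Mn_q0 c d e f n x : c * f - d * e = 1 -> (tr c d e f x).2 = 0 ->
  Mn c d e f n x = neg x.
Proof.
move=> h h0; rewrite /Mn.
have -> : refl n (tr c d e f x) = neg (tr c d e f x).
  by rewrite /refl /neg h0 /=; congr pair; ring.
by rewrite untr_neg untr_tr.
Qed.

Lemma cop_lin (x y : int * int) a1 b1 a2 b2 :
  x.1 = a1 * y.1 + b1 * y.2 -> x.2 = a2 * y.1 + b2 * y.2 ->
  coprimez x.1 x.2 -> coprimez y.1 y.2.
Proof.
move=> h1 h2 /coprimezP [[u v] /= huv]; apply/coprimezP.
exists (u * a1 + v * a2, u * b1 + v * b2) => /=.
by rewrite -huv h1 h2; ring.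
Qed.

Lemma cop_tr c d e f x : c * f - d * e = 1 -> coprimez x.1 x.2 ->
  coprimez (tr c d e f x).1 (tr c d e f x).2.
Proof.
move=> h; have E := untr_tr x h; apply: (@cop_lin x _ c e d f).
  by rewrite -[X in X.1 = _]E.
by rewrite -[X in X.2 = _]E.
Qed.

Lemma cop_untr c d e f x : c * f - d * e = 1 -> coprimez x.1 x.2 ->
  coprimez (untr c d e f x).1 (untr c d e f x).2.
Proof.
move=> h; have E := tr_untr x h; apply: (@cop_lin x _ f (-e) (-d) c).
  by rewrite -[X in X.1 = _]E /tr /=; ring.
by rewrite -[X in X.2 = _]E /tr /=; ring.
Qed.

Lemma cop_refl n x : coprimez x.1 x.2 -> coprimez (refl n x).1 (refl n x).2.
Proof.
apply: (@cop_lin x _ (-1) (2*n+1) 0 1).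
  by rewrite -[X in X.1 = _](refl_invol n x) /refl /=; ring.
by rewrite /=; ring.
Qed.

Lemma cop_Mn c d e f n x : c * f - d * e = 1 -> coprimez x.1 x.2 ->
  coprimez (Mn c d e f n x).1 (Mn c d e f n x).2.
Proof. by move=> h hx; rewrite /Mn; apply: cop_untr => //; apply: cop_refl; apply: cop_tr. Qed.

Lemma cop_neg x : coprimez x.1 x.2 -> coprimez (neg x).1 (neg x).2.
Proof. by rewrite /neg /= coprimeNz coprimezN. Qed.

Lemma reg_neg n y : reg n (neg y) = reg n y.
Proof. by rewrite /reg /neg /= !mulrNN. Qed.

Lemma reg_refl n y : reg n (refl n y) = reg n y.
Proof.
case: y => p q; rewrite /reg /refl /=.
have -> : ((2 * n + 1) * q - p) * q = 2 * (n * (q * q)) + q * q - p * q by ring.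
have -> : (n + 1) * (q * q) = n * (q * q) + q * q by ring.
set W := q * q; set U := p * q; set N := n * W.
apply/andP/andP => -[h1 h2]; split; lia.
Qed.

Lemma reg_uniq n n' y : reg n y -> reg n' y -> n = n'.
Proof.
case: y => p q; rewrite /reg /= => /andP[h1 h2] /andP[h3 h4].
have hW : 0 < q * q by nia.
set W := q * q in h1 h2 h3 h4 hW; set U := p * q in h1 h2 h3 h4.
nia.
Qed.

Lemma reg_q n y : reg n y -> y.2 != 0.
Proof. case: y => p q; rewrite /reg /= => /andP[h1 h2]; apply/eqP => h; subst q. lia. Qed.

Lemma reg_nat_uniq (n n' : nat) y : reg n%:Z y -> reg n'%:Z y -> n = n'.
Proof. by move=> h1 h2; have /eqP := reg_uniq h1 h2; rewrite eqz_nat => /eqP. Qed.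

Lemma kge (kk q s : int) : 0 < kk -> 0 < q -> q = s * kk -> kk <= q.
Proof. move=> h1 h2 e; have hs : 0 < s by nia. nia. Qed.

Lemma sep_core (n kk p1 q1 p2 q2 : int) : 1 < kk -> 0 < q1 -> 0 < q2 ->
  (exists s, q1 = s * kk) -> (exists s, q2 = s * kk) ->
  reg n (p1, q1) -> ~~ reg n (p2, q2) -> p2 != n * q2 -> p2 != (n + 1) * q2 ->
  `|p1 * q2 - q1 * p2| != kk.
Proof.
move=> hk hq1 hq2 [s1 e1] [s2 e2]; rewrite /reg /= => /andP[h1 h2].
move=> /nandP hn /eqP hne1 /eqP hne2.
have k1 : kk <= q1 by apply: (kge (s := s1)); lia.
have k2 : kk <= q2 by apply: (kge (s := s2)); lia.
have a1 : n * q1 < p1 by nia.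
have a2 : p1 < (n + 1) * q1 by nia.
case: hn => /negP hn.
- have b : p2 < n * q2.
    have : ~ (n * q2 < p2) by move=> c; apply: hn; nia.
    lia.
  have : q1 + q2 <= p1 * q2 - q1 * p2 by nia.
  lia.
- have b : (n + 1) * q2 < p2.
    have : ~ (p2 < (n + 1) * q2) by move=> c; apply: hn; nia.
    lia.
  have : q1 + q2 <= q1 * p2 - p1 * q2 by nia.
  lia.
Qed.

Definition kdiv (kk q : int) := exists s, q = s * kk.

Lemma kdivN kk q : kdiv kk q -> kdiv kk (- q).
Proof. by case=> s ->; exists (- s); ring. Qed.

Lemma cop_not_mult (kk n p q : int) : 1 < kk -> kdiv kk q -> coprimez p q -> p != n * q.
Proof.
move=> hk [s ->] hc; apply/eqP => hp; move: hc; rewrite hp coprimezMl => /andP[_].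
rewrite coprimezE /coprime gcdnn => /eqP h.
have : (s * kk = 1) \/ (s * kk = -1) by lia.
case=> h2; [have : 0 < s by nia | have : s < 0 by nia]; nia.
Qed.

Lemma sep (n kk : int) (y1 y2 : int * int) : 1 < kk ->
  kdiv kk y1.2 -> kdiv kk y2.2 -> coprimez y2.1 y2.2 ->
  reg n y1 -> ~~ reg n y2 -> y2.2 != 0 -> `|det2 y1 y2| != kk.
Proof.
move=> hk d1 d2 hc r1 r2 q2nz.
have n1 := cop_not_mult n hk d2 hc.
have n2 := cop_not_mult (n + 1) hk d2 hc.
have q1nz := reg_q r1.
have key : forall z1 z2 : int * int, 0 < z1.2 -> 0 < z2.2 ->
    kdiv kk z1.2 -> kdiv kk z2.2 -> reg n z1 -> ~~ reg n z2 ->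
    z2.1 != n * z2.2 -> z2.1 != (n + 1) * z2.2 -> `|det2 z1 z2| != kk.
  move=> [p1 q1] [p2 q2] h1 h2 h3 h4 h5 h6 h7 h8; exact: (sep_core hk h1 h2 h3 h4 h5 h6 h7 h8).
have nN : forall m : int, y2.1 != m * y2.2 -> (neg y2).1 != m * (neg y2).2.
  by move=> m; rewrite /neg /= mulrN eqr_opp.
have [g1|g1] : 0 < y1.2 \/ 0 < (neg y1).2 by simpl; lia.
- have [g2|g2] : 0 < y2.2 \/ 0 < (neg y2).2 by simpl; lia.
  + exact: key.
  + rewrite -normrN -det2_negr; apply: key => //; first exact: kdivN.
    * by rewrite reg_neg.
    * exact: nN.
    * exact: nN.
- rewrite -normrN -det2_negl.
  have [g2|g2] : 0 < y2.2 \/ 0 < (neg y2).2 by simpl; lia.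
  + apply: key => //; first exact: kdivN. by rewrite reg_neg.
  + rewrite -normrN -det2_negr; apply: key => //; try exact: kdivN.
    * by rewrite reg_neg.
    * by rewrite reg_neg.
    * exact: nN.
    * exact: nN.
Qed.

Lemma natZp0 m n : (n%:R : 'Z_(m.+2)) = 0 <-> (m.+2 %| n)%N.
Proof.
rewrite /dvdn -(val_Zp_nat (p:=m.+2) isT n); split => [-> //| /eqP h].
by apply: val_inj.
Qed.

Lemma Zk0 m : ((m.+2)%:R : 'Z_(m.+2)) = 0.
Proof. by apply/natZp0. Qed.

Lemma intr_Zp0 m (z : int) : (z%:~R : 'Z_(m.+2)) = 0 <-> kdiv (m.+2)%:Z z.
Proof.
have E : kdiv (m.+2)%:Z z <-> (m.+2 %| `|z|)%N.
  rewrite -[(_ %| `|z|)%N]/((m.+2)%:Z %| z)%Z; split.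
    by case=> s ->; apply/dvdzP; exists s.
  by move/dvdzP.
rewrite E {E}; case: z => n.
  by rewrite -pmulrn natZp0.
rewrite NegzE intrN -pmulrn; split.
  by move=> h; apply/natZp0; apply/eqP; rewrite -oppr_eq0 h.
by move/natZp0 => ->; rewrite oppr0.
Qed.

Lemma nat_lift (A B K : nat) : (0 < A)%N -> (0 < B)%N ->
  (forall p, prime p -> (p %| A)%N -> (p %| B)%N -> (p %| K)%N -> False) ->
  coprime (A + (B`_(\pi(A))^')%N * K) B.
Proof.
move=> hA hB hp; set t := (B`_(\pi(A))^')%N.
rewrite /coprime; set g := gcdn _ _.
have g0 : (0 < g)%N by rewrite gcdn_gt0 hB orbT.
case: (ltngtP g 1) => [|g1|//]; first by lia.
exfalso.
have pp := pdiv_prime g1.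
set p := pdiv g in pp.
have pd : (p %| g)%N by apply: pdiv_dvd.
have pAt : (p %| A + t * K)%N by apply: dvdn_trans pd (dvdn_gcdl _ _).
have pB : (p %| B)%N by apply: dvdn_trans pd (dvdn_gcdr _ _).
have piA : (p %| A)%N -> p \in \pi(A) by move=> h; rewrite mem_primes pp hA h.
have tnat : (\pi(A))^'.-nat t by apply: part_pnat.
have tpos : (0 < t)%N by apply: part_gt0.
case pA: (p %| A)%N.
- have ptK : (p %| t * K)%N by rewrite -(dvdn_addr _ pA).
  rewrite Euclid_dvdM // in ptK; case/orP: ptK => h.
  + have : p \in \pi(t) by rewrite mem_primes pp tpos h.
    move/(pnatPpi tnat) => hh; have h2 := piA pA; move: hh h2. rewrite !inE /= => /negP; done.
  + exact: (hp p pp pA pB h).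
- have : (p %| t)%N.
    have := pB; rewrite -(partnC (\pi(A)) hB) Euclid_dvdM // => /orP[] // h.
    have : p \in \pi((B`_(\pi(A)))%N) by rewrite mem_primes pp part_gt0 h.
    move/(pnatPpi (part_pnat _ _)) => hpi.
    move: hpi; rewrite mem_primes => /and3P[_ _ hh]; by rewrite hh in pA.
  move=> ht.
  have : (p %| A)%N.
    by rewrite (dvdn_addl _ (dvdn_mulr K ht)) in pAt.
  by rewrite pA.
Qed.

Lemma lift m (a b : 'Z_(m.+2)) : admissible (m.+2) a b ->
  exists c d : int, [/\ coprimez c d, c%:~R = a & d%:~R = b].
Proof.
move=> hL.
have key : forall p, prime p -> (p %| (a : nat) + m.+2)%N -> (p %| (b : nat) + m.+2)%N ->
    (p %| m.+2)%N -> False.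
  move=> p pp pA pB pK.
  rewrite (dvdn_addl _ pK) in pA; rewrite (dvdn_addl _ pK) in pB.
  have k0 : forall x : 'Z_(m.+2), (p %| x)%N -> ((m.+2 %/ p)%:R : 'Z_(m.+2)) * x = 0.
    move=> x px; rewrite -[x in _ * x]natr_Zp -natrM; apply/natZp0.
    rewrite -(divnK px) mulnCA; apply: dvdn_mull; rewrite divnK //.
  have := hL _ (k0 _ pA) (k0 _ pB) => /natZp0 h.
  have p1 : (1 < p)%N by apply: prime_gt1.
  have q0 : (0 < m.+2 %/ p)%N by rewrite divn_gt0 ?(dvdn_leq _ pK) // ltnW.
  have := dvdn_leq q0 h; rewrite leqNgt ltn_Pdiv //.
have := nat_lift (A := (a : nat) + m.+2) (B := (b : nat) + m.+2) (K := m.+2) ltac:(by rewrite addnS) ltac:(by rewrite addnS) key.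
set t := (_`__)%N => hc.
exists (Posz ((a : nat) + m.+2 + t * m.+2)), (Posz ((b : nat) + m.+2)); split.
- by rewrite coprimezE.
- by rewrite -pmulrn !natrD natrM Zk0 mulr0 !addr0 natr_Zp.
- by rewrite -pmulrn !natrD Zk0 addr0 natr_Zp.
Qed.

Definition nrm (x : int * int) : int * int :=
  if 0 < x.2 then x else if x.2 < 0 then neg x else (1, 0).

Lemma nrm_pm x : coprimez x.1 x.2 -> nrm x = x \/ nrm x = neg x.
Proof.
rewrite /nrm; case: ifP => [_|h1]; first by left.
case: ifP => [_|h2]; first by right.
have h0 : x.2 = 0 by lia.
rewrite h0 coprimezE /coprime gcdn0 => /eqP h.
case: x h h0 h1 h2 => x1 x2 /= h -> _ _.
have [->|->] : x1 = 1 \/ x1 = -1 by lia.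
  by left.
by right; rewrite /neg /= opprK oppr0.
Qed.

Lemma vert_cop (u : int * int) : is_vertex u -> coprimez u.1 u.2.
Proof. by case/andP. Qed.

Lemma nrm_vert x : coprimez x.1 x.2 -> is_vertex (nrm x).
Proof.
move=> hc; rewrite /nrm; case: ifP => h1.
  by rewrite /is_vertex hc h1.
case: ifP => h2.
  by rewrite /is_vertex cop_neg //= oppr_gt0 h2.
by [].
Qed.

Definition inf0 : V := exist _ (1, 0) isT.
Definition mkV (x : int * int) : V := insubd inf0 (nrm x).

Lemma mkV_val x : coprimez x.1 x.2 -> sval (mkV x) = nrm x.
Proof. by move=> hc; rewrite /mkV val_insubd nrm_vert. Qed.

Lemma mkV_pm x : coprimez x.1 x.2 -> sval (mkV x) = x \/ sval (mkV x) = neg x.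
Proof. by move=> hc; rewrite mkV_val //; apply: nrm_pm. Qed.

Lemma vert_pm_eq (u w : int * int) : is_vertex u -> is_vertex w ->
  u = w \/ u = neg w -> u = w.
Proof.
move=> hu hw [//|e]; exfalso; subst u.
move: hu hw; case: w => w1 w2; rewrite /is_vertex /neg /= => /andP[_ hu] /andP[_ hw].
case/orP: hu => [hu|/eqP [e1 e2]].
  case/orP: hw => [hw|/eqP [e1 e2]]; [lia | by rewrite e2 in hu].
case/orP: hw => [hw|/eqP [f1 f2]]; first lia.
by rewrite f1 in e1.
Qed.

Lemma V_eq (v w : V) : sval v = sval w \/ sval v = neg (sval w) -> v = w.
Proof.
case: v w => [u hu] [w hw] /= h.
have e := vert_pm_eq hu hw h; subst u.
by rewrite (bool_irrelevance hu hw).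
Qed.

Lemma neg_inj x y : neg x = neg y -> x = y.
Proof. by move=> h; rewrite -(neg_invol x) h neg_invol. Qed.


Definition fib m (a b : 'Z_(m.+2)) (x : int * int) : Prop :=
  exists2 lam : 'Z_(m.+2), lam \is a GRing.unit &
    (x.1%:~R = lam * a /\ x.2%:~R = lam * b).

Lemma fib_neg m (a b : 'Z_(m.+2)) x : fib a b x -> fib a b (neg x).
Proof.
case=> lam hl [h1 h2]; exists (- lam); first by rewrite unitrN.
by rewrite /neg /= !intrN h1 h2 !mulNr.
Qed.

Lemma fib_mkV m (a b : 'Z_(m.+2)) x : coprimez x.1 x.2 -> fib a b x ->
  in_fiber (m.+2) a b (mkV x).
Proof.
move=> hc hf; rewrite /in_fiber /vnum /vden.
by case: (mkV_pm hc) => ->; [exact: hf | exact: fib_neg].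
Qed.

Record setup m (a b : 'Z_(m.+2)) := Setup {
  sc : int; sd : int; se : int; sf : int;
  s_det : sc * sf - sd * se = 1;
  s_a : sc%:~R = a; s_b : sd%:~R = b }.

Lemma setup_ex m (a b : 'Z_(m.+2)) : admissible (m.+2) a b -> inhabited (setup a b).
Proof.
move=> /lift [c [d [hc ha hb]]].
case/coprimezP: hc => [[u v] /= huv].
constructor; apply: (@Setup m a b c d (- v) u _ ha hb).
by rewrite -huv; ring.
Qed.


Definition trS m (a b : 'Z_(m.+2)) (S : setup a b) x := tr (sc S) (sd S) (se S) (sf S) x.
Definition untrS m (a b : 'Z_(m.+2)) (S : setup a b) x := untr (sc S) (sd S) (se S) (sf S) x.
Definition MnS m (a b : 'Z_(m.+2)) (S : setup a b) (n : nat) x :=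
  Mn (sc S) (sd S) (se S) (sf S) n%:Z x.

Lemma fib_trk m (a b : 'Z_(m.+2)) (S : setup a b) x :
  fib a b x -> kdiv (m.+2)%:Z (trS S x).2.
Proof.
case=> lam _ [h1 h2]; apply/intr_Zp0.
rewrite /trS /tr /= intrD !intrM intrN h1 h2 (s_a S) (s_b S); ring.
Qed.

Lemma fib_Mn m (a b : 'Z_(m.+2)) (S : setup a b) n x :
  fib a b x -> fib a b (MnS S n x).
Proof.
move=> hf; have /intr_Zp0 hk := fib_trk S hf.
case: hf => lam hl [h1 h2]; exists (- lam); first by rewrite unitrN.
have E := untr_tr x (s_det S).
rewrite /MnS /Mn; set y := tr _ _ _ _ x; rewrite -/y in E hk.
have e1 : (untr (sc S) (sd S) (se S) (sf S) (refl n y)).1 =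
   - (untr (sc S) (sd S) (se S) (sf S) y).1 + (sc S * (2 * n%:Z + 1) + se S * 2) * y.2.
  by rewrite /untr /refl /=; ring.
have e2 : (untr (sc S) (sd S) (se S) (sf S) (refl n y)).2 =
   - (untr (sc S) (sd S) (se S) (sf S) y).2 + (sd S * (2 * n%:Z + 1) + sf S * 2) * y.2.
  by rewrite /untr /refl /=; ring.
rewrite e1 e2 E !intrD !intrN !intrM hk h1 h2 !mulr0 !addr0 !mulNr; split => //.
Qed.

Definition vec m (a b : 'Z_(m.+2)) (z : fiber (m.+2) a b) : int * int := sval (sval z).

Lemma vec_cop m (a b : 'Z_(m.+2)) (z : fiber (m.+2) a b) : coprimez (vec z).1 (vec z).2.
Proof. exact: vert_cop (svalP (sval z)). Qed.

Lemma vec_fib m (a b : 'Z_(m.+2)) (z : fiber (m.+2) a b) : fib a b (vec z).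
Proof. exact: (svalP z). Qed.

Lemma fiber_eq m (a b : 'Z_(m.+2)) (z w : fiber (m.+2) a b) :
  vec z = vec w \/ vec z = neg (vec w) -> z = w.
Proof.
move=> h; have e := V_eq h.
case: z w e {h} => [v hv] [w hw] /= e; subst w.
by rewrite (proof_irrelevance _ hv hw).
Qed.

Lemma gmap_pf m (a b : 'Z_(m.+2)) (S : setup a b) n (z : fiber (m.+2) a b) :
  in_fiber (m.+2) a b (mkV (MnS S n (vec z))).
Proof.
apply: fib_mkV; first exact: cop_Mn (s_det S) (vec_cop z).
exact: fib_Mn (vec_fib z).
Qed.

Definition gmap m (a b : 'Z_(m.+2)) (S : setup a b) n (z : fiber (m.+2) a b)
  : fiber (m.+2) a b := exist _ (mkV (MnS S n (vec z))) (gmap_pf S n z).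

Lemma gmap_vec m (a b : 'Z_(m.+2)) (S : setup a b) n (z : fiber (m.+2) a b) :
  vec (gmap S n z) = MnS S n (vec z) \/ vec (gmap S n z) = neg (MnS S n (vec z)).
Proof. apply: mkV_pm; exact: cop_Mn (s_det S) (vec_cop z). Qed.

Lemma gmap_reg m (a b : 'Z_(m.+2)) (S : setup a b) n (z : fiber (m.+2) a b) :
  reg n%:Z (trS S (vec z)) -> reg n%:Z (trS S (vec (gmap S n z))).
Proof.
move=> r; rewrite /trS; case: (gmap_vec S n z) => ->.
  by rewrite /MnS tr_Mn ?(s_det S) // reg_refl.
by rewrite tr_neg reg_neg /MnS tr_Mn ?(s_det S) // reg_refl.
Qed.

Lemma gmap_invol m (a b : 'Z_(m.+2)) (S : setup a b) n (z : fiber (m.+2) a b) :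
  gmap S n (gmap S n z) = z.
Proof.
apply: fiber_eq; have D := s_det S.
case: (gmap_vec S n (gmap S n z)) => ->; case: (gmap_vec S n z) => ->;
  rewrite /MnS ?Mn_neg Mn_invol //; by [left | right | rewrite neg_invol; left].
Qed.

Lemma absdet_pm (x y x' y' : int * int) :
  (x' = x \/ x' = neg x) -> (y' = y \/ y' = neg y) -> `|det2 x' y'| = `|det2 x y|.
Proof.
by case=> ->; case=> ->; rewrite ?det2_negl ?det2_negr ?opprK ?normrN.
Qed.

Lemma gmap_det m (a b : 'Z_(m.+2)) (S : setup a b) n (z w : fiber (m.+2) a b) :
  `|det2 (vec (gmap S n z)) (vec (gmap S n w))| = `|det2 (vec z) (vec w)|.
Proof.
rewrite (absdet_pm (gmap_vec S n z) (gmap_vec S n w)).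
by rewrite /MnS det2_Mn ?(s_det S) // normrN.
Qed.

Lemma gmap_det0 m (a b : 'Z_(m.+2)) (S : setup a b) n (z w : fiber (m.+2) a b) :
  (trS S (vec w)).2 = 0 ->
  `|det2 (vec (gmap S n z)) (vec w)| = `|det2 (vec z) (vec w)|.
Proof.
move=> h0.
have E : vec w = neg (MnS S n (vec w)).
  by rewrite /MnS Mn_q0 ?(s_det S) // neg_invol.
rewrite [in LHS]E (absdet_pm (gmap_vec S n z) (or_intror erefl)).
by rewrite /MnS det2_Mn ?(s_det S) // normrN.
Qed.

Lemma sepZ m (a b : 'Z_(m.+2)) (S : setup a b) n (z w : fiber (m.+2) a b) :
  reg n%:Z (trS S (vec z)) -> ~~ reg n%:Z (trS S (vec w)) -> (trS S (vec w)).2 != 0 ->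
  `|det2 (vec z) (vec w)| != (m.+2)%:Z.
Proof.
move=> r1 r2 q; rewrite -(det2_tr _ _ (s_det S)).
apply: (sep (n := n%:Z)) => //.
- exact: fib_trk (vec_fib z).
- exact: fib_trk (vec_fib w).
- exact: cop_tr (s_det S) (vec_cop w).
Qed.

Lemma mixed m (a b : 'Z_(m.+2)) (S : setup a b) n (z w : fiber (m.+2) a b) :
  reg n%:Z (trS S (vec z)) -> ~~ reg n%:Z (trS S (vec w)) ->
  (`|det2 (vec z) (vec w)| = (m.+2)%:Z <->
   `|det2 (vec (gmap S n z)) (vec w)| = (m.+2)%:Z).
Proof.
move=> r1 r2; have [q0|q0] := eqVneq (trS S (vec w)).2 0.
  by rewrite gmap_det0.
have /eqP h1 := sepZ r1 r2 q0.
have /eqP h2 := sepZ (gmap_reg r1) r2 q0.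
by split.
Qed.

Definition fA m (a b : 'Z_(m.+2)) (S : setup a b) (A : nat -> Prop)
  (z : fiber (m.+2) a b) : fiber (m.+2) a b :=
  match excluded_middle_informative (exists n, A n /\ reg n%:Z (trS S (vec z))) with
  | left H => gmap S (proj1_sig (constructive_indefinite_description _ H)) z
  | right _ => z
  end.

Lemma fA_cases m (a b : 'Z_(m.+2)) (S : setup a b) A (z : fiber (m.+2) a b) :
  (exists n, [/\ A n, reg n%:Z (trS S (vec z)) & fA S A z = gmap S n z]) \/
  ((forall n, A n -> ~~ reg n%:Z (trS S (vec z))) /\ fA S A z = z).
Proof.
rewrite /fA; case: excluded_middle_informative => [H|H].
  left; case: constructive_indefinite_description => n [An rn] /=.
  by exists n.
right; split => // n An; apply/negP => r; apply: H; by exists n.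
Qed.

Lemma fA_invol m (a b : 'Z_(m.+2)) (S : setup a b) A : involutive (fA S A).
Proof.
move=> z; case: (fA_cases S A z) => [[n [An rn ->]]|[hn ->]].
  case: (fA_cases S A (gmap S n z)) => [[n' [An' rn' ->]]|[hn' _]].
    have rg := gmap_reg rn.
    by rewrite -(reg_nat_uniq rg rn') gmap_invol.
  by have := hn' n An; rewrite gmap_reg.
case: (fA_cases S A z) => [[n [An rn _]]|[_ ->//]].
by have := hn n An; rewrite rn.
Qed.

Lemma absdet_sym (x y : int * int) : `|det2 y x| = `|det2 x y|.
Proof. by rewrite det2_sym normrN. Qed.

Lemma fA_adj m (a b : 'Z_(m.+2)) (S : setup a b) A (z w : fiber (m.+2) a b) :
  `|det2 (vec z) (vec w)| = (m.+2)%:Z <->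
  `|det2 (vec (fA S A z)) (vec (fA S A w))| = (m.+2)%:Z.
Proof.
case: (fA_cases S A z) => [[n [An rn ->]]|[hn ->]];
  case: (fA_cases S A w) => [[n' [An' rn' ->]]|[hn' ->]].
- have [e|ne] := eqVneq n n'.
    by subst n'; rewrite gmap_det.
  have r2 : ~~ reg n%:Z (trS S (vec w)).
    by apply/negP => r; move: ne; rewrite (reg_nat_uniq r rn') eqxx.
  have /eqP h1 := sepZ rn r2 (reg_q rn').
  have r2' : ~~ reg n%:Z (trS S (vec (gmap S n' w))).
    by apply/negP => r; move: ne; rewrite (reg_nat_uniq r (gmap_reg rn')) eqxx.
  have /eqP h2 := sepZ (gmap_reg rn) r2' (reg_q (gmap_reg rn')).
  by split.
- exact: mixed rn (hn' n An).
- rewrite absdet_sym [X in _ <-> X = _]absdet_sym.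
  exact: mixed rn' (hn n' An').
- by [].
Qed.

Definition wit m (a b : 'Z_(m.+2)) (S : setup a b) (n : nat) : int * int :=
  let Q := (m.+2)%:Z * (m.+2)%:Z in untrS S (Q * n%:Z + 1, Q).

Lemma wit_cop m (a b : 'Z_(m.+2)) (S : setup a b) n : coprimez (wit S n).1 (wit S n).2.
Proof.
apply: cop_untr (s_det S) _; apply/coprimezP; exists (1, - n%:Z) => /=; ring.
Qed.

Lemma wit_fib m (a b : 'Z_(m.+2)) (S : setup a b) n : fib a b (wit S n).
Proof.
have hK : ((m.+2)%:Z%:~R : 'Z_(m.+2)) = 0 by apply/intr_Zp0; exists 1; rewrite mul1r.
exists 1; first exact: unitr1.
have h1 : (((m.+2)%:Z * (m.+2)%:Z * n%:Z + 1)%:~R : 'Z_(m.+2)) = 1.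
  by rewrite intrD !intrM hK !mul0r add0r.
have h2 : (((m.+2)%:Z * (m.+2)%:Z)%:~R : 'Z_(m.+2)) = 0.
  by rewrite intrM hK mul0r.
have gen : forall y : int * int, (y.1%:~R : 'Z_(m.+2)) = 1 -> (y.2%:~R : 'Z_(m.+2)) = 0 ->
    ((untrS S y).1%:~R = 1 * a /\ (untrS S y).2%:~R = 1 * b).
  move=> [y1 y2] /= e1 e2; rewrite /untrS /untr /= !intrD !intrM e1 e2 (s_a S) (s_b S).
  by split; ring.
exact: gen.
Qed.

Definition W m (a b : 'Z_(m.+2)) (S : setup a b) n : fiber (m.+2) a b :=
  exist _ (mkV (wit S n)) (fib_mkV (wit_cop S n) (wit_fib S n)).

Lemma W_tr m (a b : 'Z_(m.+2)) (S : setup a b) n :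
  let y := ((m.+2)%:Z * (m.+2)%:Z * n%:Z + 1, (m.+2)%:Z * (m.+2)%:Z) in
  trS S (vec (W S n)) = y \/ trS S (vec (W S n)) = neg y.
Proof.
move=> y; rewrite /vec /W /=; case: (mkV_pm (wit_cop S n)) => ->.
  by left; rewrite /trS /wit /untrS tr_untr ?(s_det S).
by right; rewrite /trS tr_neg /wit /untrS tr_untr ?(s_det S).
Qed.

Lemma W_reg m (a b : 'Z_(m.+2)) (S : setup a b) n : reg n%:Z (trS S (vec (W S n))).
Proof.
have H : reg n%:Z ((m.+2)%:Z * (m.+2)%:Z * n%:Z + 1, (m.+2)%:Z * (m.+2)%:Z).
  rewrite /reg /=; set Q := (m.+2)%:Z * (m.+2)%:Z.
  have hQ : 4 <= Q by rewrite /Q; nia.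
  have -> : (Q * n%:Z + 1) * Q = n%:Z * (Q * Q) + Q by ring.
  have -> : (n%:Z + 1) * (Q * Q) = n%:Z * (Q * Q) + Q * Q by ring.
  apply/andP; split; nia.
by case: (W_tr S n) => ->; rewrite ?reg_neg.
Qed.

Lemma W_moved m (a b : 'Z_(m.+2)) (S : setup a b) n : gmap S n (W S n) <> W S n.
Proof.
move=> E.
have D := s_det S.
have E2 : MnS S n (vec (W S n)) = vec (W S n) \/ MnS S n (vec (W S n)) = neg (vec (W S n)).
  case: (gmap_vec S n (W S n)) => h; rewrite E in h.
    by left; symmetry.
  by right; rewrite [in RHS]h neg_invol.
have E3 : refl n%:Z (trS S (vec (W S n))) = trS S (vec (W S n)) \/
          refl n%:Z (trS S (vec (W S n))) = neg (trS S (vec (W S n))).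
  have T : refl n%:Z (trS S (vec (W S n))) = trS S (MnS S n (vec (W S n))).
    by rewrite /trS /MnS tr_Mn.
  by rewrite T; case: E2 => ->; [left | right; rewrite /trS tr_neg].
set y := ((m.+2)%:Z * (m.+2)%:Z * n%:Z + 1, (m.+2)%:Z * (m.+2)%:Z).
have E4 : refl n%:Z y = y \/ refl n%:Z y = neg y.
  case: (W_tr S n) => h; rewrite h in E3; first by [].
  rewrite refl_neg neg_invol in E3; case: E3 => h'.
    by left; apply: neg_inj.
  by right; apply: neg_inj; rewrite neg_invol.
have hQ : 4 <= (m.+2)%:Z * (m.+2)%:Z by nia.
case: E4 => h; have := congr1 fst h; rewrite /refl /neg /= => h1; nia.
Qed.

Theorem main m (a b : 'Z_(m.+2)) (hL : admissible (m.+2) a b) :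
  ~ exists e : nat -> (fiber (m.+2) a b -> fiber (m.+2) a b),
      forall f, is_fiber_aut (m.+2) a b f -> exists n : nat, forall x, e n x = f x.
Proof.
case: (setup_ex hL) => S [e he].
pose A := fun n => e n (W S n) = W S n.
have aut : is_fiber_aut (m.+2) a b (fA S A).
  split; first exact: inv_bij (fA_invol S A).
  move=> x y; exact: fA_adj S A x y.
case: (he _ aut) => n hn.
case: (fA_cases S A (W S n)) => [[n' [An' rn' E]]|[hn' E]].
- have en : n' = n := reg_nat_uniq rn' (W_reg S n).
  subst n'.
  apply: (@W_moved _ _ _ S n); rewrite -E -hn; exact: An'.
- have An : A n by rewrite /A hn E.
  by have := hn' n An; rewrite W_reg.
Qed.

Local Close Scope ring_scope.

(* uncountable: no sequence indexed by nat enumerates all automorphisms *)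
Theorem proposition4p15 (k : nat) (hk : (1 < k)%N) (a b : 'Z_k)
  (hL : admissible k a b) :
  ~ exists e : nat -> (fiber k a b -> fiber k a b),
      forall f, is_fiber_aut k a b f -> exists n : nat, forall x, e n x = f x.
Proof.
case: k hk a b hL => [|[|m]] // _ a b hL; exact: main.
Qed.
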